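(* In any environment $(u_S,u_R)$ satisfying scant-indifferences, for every $\omega\in\Omega$ and all $a_i\ne a_j$ in $A$, $u_S(a_i,\omega)\ne u_S(a_j,\omega)$.
   Context: $A=\{a_1,\dots,a_{|A|}\}$ and $\Omega$ are finite nonempty sets; an environment is a pair of functions $u_S,u_R:A\times\Omega\to[0,1]$. For $a\in A$ let $\mathbf u_S(a)=u_S(a,\cdot)\in\mathbb R^{|\Omega|}$ and $\mathbf u_R(a)=u_R(a,\cdot)$. For each $i$, the expanded-indifference matrix $T^i$ has $|\Omega|$ columns and rows: $\mathbf u_S(a_j)-\mathbf u_S(a_i)$ for each $j\ne i$, then $\mathbf u_R(a_j)-\mathbf u_R(a_i)$ for each $j\ne i$, then the rows of the $|\Omega|\times|\Omega|$ identity matrix. A row-submatrix is obtained by deleting some rows. The environment satisfies scant-indifferences if for each $i$ every row-submatrix of $T^i$ has full rank. *)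

(* Defs.v *)
From HB Require Import structures.
From mathcomp Require Import all_boot all_order all_algebra.
From mathcomp Require Import reals.
Set Implicit Arguments. Unset Strict Implicit. Unset Printing Implicit Defensive.
Import Order.TTheory GRing.Theory Num.Theory.
Local Open Scope ring_scope.

(* Actions A = {a_0,...,a_(nA-1)} = 'I_nA, states Omega = 'I_nO.
   An environment is a pair uS uR : 'I_nA -> 'I_nO -> R with values in [0,1]. *)

Definition environment (R : realType) (nA nO : nat)
  (uS uR : 'I_nA -> 'I_nO -> R) : Prop :=
  forall a w, [/\ 0 <= uS a w, uS a w <= 1, 0 <= uR a w & uR a w <= 1].

(* Row labels of the expanded-indifference matrices:
   inl (false, j) : row u_S(a_j) - u_S(a_i)
   inl (true,  j) : row u_R(a_j) - u_R(a_i)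
   inr k          : k-th row of the |Omega| x |Omega| identity matrix. *)
Definition rowlab (nA nO : nat) : finType := ((bool * 'I_nA) + 'I_nO)%type.

(* The rows actually present in T^i (those with j <> i). *)
Definition Trows (nA nO : nat) (i : 'I_nA) : {set rowlab nA nO} :=
  [set x | match x with inl (_, j) => j != i | inr _ => true end].

Definition Trow (R : realType) (nA nO : nat) (uS uR : 'I_nA -> 'I_nO -> R)
  (i : 'I_nA) (x : rowlab nA nO) : 'rV[R]_nO :=
  match x with
  | inl (false, j) => \row_w (uS j w - uS i w)
  | inl (true, j)  => \row_w (uR j w - uR i w)
  | inr k => \row_w (if w == k then 1 else 0)
  end.

Definition Tsub (R : realType) (nA nO : nat) (uS uR : 'I_nA -> 'I_nO -> R)
  (i : 'I_nA) (S : {set rowlab nA nO}) : 'M[R]_(#|S|, nO) :=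
  \matrix_(k < #|S|) Trow uS uR i (enum_val k).

Definition full_rank (R : fieldType) (m n : nat) (M : 'M[R]_(m, n)) : bool :=
  \rank M == minn m n.

Definition scant_indifferences (R : realType) (nA nO : nat)
  (uS uR : 'I_nA -> 'I_nO -> R) : Prop :=
  forall (i : 'I_nA) (S : {set rowlab nA nO}),
    S \subset Trows nO i -> full_rank (Tsub uS uR i S).

(* Main.v *)
Require Import Defs.
From HB Require Import structures.
From mathcomp Require Import all_boot all_order all_algebra.
From mathcomp Require Import reals.
From mathcomp Require Import zify.
Import Order.TTheory GRing.Theory Num.Theory.
Local Open Scope ring_scope.

Lemma rank_lt_col (F : fieldType) m n (M : 'M[F]_(m, n)) (w : 'I_n) :
  (forall k, M k w = 0) -> (\rank M < n)%N.
Proof.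
move=> H.
set u : 'rV[F]_n := delta_mx 0 w.
have Hu : u *m M^T = 0.
  apply/matrixP=> a b; rewrite !mxE (bigD1 w) //= big1 ?addr0.
    by rewrite !mxE H mulr0.
  by move=> l /negbTE hl; rewrite !mxE hl andbF mul0r.
have : (u <= kermx M^T)%MS by apply/sub_kermxP.
move/mxrankS; rewrite mxrank_ker mxrank_tr.
have : \rank u = 1%N.
  rewrite rank_rV; case: eqP => // /matrixP /(_ 0 w); rewrite !mxE !eqxx.
  by move/eqP; rewrite oner_eq0.
move=> ->; case: n w M H u Hu => [[]//|n] w M H u Hu.
have := rank_leq_col M; lia.
Qed.

Theorem lemma3 (R : realType) (nA nO : nat) (hA : (0 < nA)%N) (hO : (0 < nO)%N)
  (uS uR : 'I_nA -> 'I_nO -> R) :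
  environment uS uR -> scant_indifferences uS uR ->
  forall (w : 'I_nO) (i j : 'I_nA), i != j -> uS i w != uS j w.
Proof.
move=> _ Hsc w i j hij; apply/negP => /eqP heq.
pose S : {set rowlab nA nO} :=
  inl (false, j) |: [set (inr k : rowlab nA nO) | k in [set~ w]].
have sub : S \subset Trows nO i.
  apply/subsetP => x; rewrite !inE => /orP [/eqP -> | /imsetP [k _ ->]] //.
  by rewrite eq_sym.
have cS : #|S| = nO.
  rewrite cardsU1 card_imset; last by move=> a b [].
  rewrite cardsC1 card_ord.
  have -> : (inl (false, j) : rowlab nA nO) \notin [set (inr k : rowlab nA nO) | k in [set~ w]].
    by apply/imsetP => -[].
  by rewrite /= add1n prednK.
have := Hsc i S sub; rewrite /full_rank.
have : (\rank (Tsub uS uR i S) < nO)%N.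
  apply: (@rank_lt_col _ _ _ _ w) => k.
  rewrite /Tsub mxE.
  have := enum_valP k; rewrite !inE.
  case/orP => [/eqP -> | /imsetP [l hl ->]] /=.
    by rewrite mxE heq subrr.
  by rewrite mxE; move: hl; rewrite !inE eq_sym => /negbTE ->.
have hm : minn #|S| nO = nO by rewrite cS minnn.
move=> hr /eqP he; rewrite he hm ltnn in hr.
by [].
Qed.
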